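(* Let $p,q,N$ be positive integers and $\mathbf{C}=\begin{bmatrix}1 & p\\ q & 1+pq\end{bmatrix}$. The least period of the Cat map over $\mathbb{Z}_N$ is $T$ if and only if $T$ is the minimum positive integer $n$ satisfying $$p H_n\equiv 0,\quad qH_n\equiv 0,\quad \tfrac12 G_n-\tfrac12 pqH_n\equiv 1,\quad \tfrac12 G_n+\tfrac12 pqH_n\equiv 1 \pmod N.$$
   Context: The Cat map over $\mathbb{Z}_N$ is $v\mapsto \mathbf{C}v\bmod N$ on $\mathbb{Z}_N^2$; its least period is the least positive integer $n$ with $\mathbf{C}^nv\equiv v\pmod N$ for all $v\in\mathbb{Z}_N^2$. Put $A=pq+2$, $B=\sqrt{A^2-4}$, $G_n=\left(\frac{A+B}{2}\right)^n+\left(\frac{A-B}{2}\right)^n$, $H_n=\frac{1}{B}\left(\left(\frac{A+B}{2}\right)^n-\left(\frac{A-B}{2}\right)^n\right)$; $H_n$ and $\frac12G_n\pm\frac12pqH_n$ are integers (they are entries of $\mathbf{C}^n$). *)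

(* Defs.v *)
From HB Require Import structures.
From mathcomp Require Import all_boot all_order all_algebra.
From mathcomp Require Import reals.
Set Implicit Arguments. Unset Strict Implicit. Unset Printing Implicit Defensive.
Import Order.TTheory GRing.Theory Num.Theory.
Local Open Scope ring_scope.

Definition catC (p q : nat) : 'M[int]_2 :=
  \matrix_(i < 2, j < 2)
    if i == 0 then (if j == 0 then 1 else p%:Z)
    else (if j == 0 then q%:Z else 1 + p%:Z * q%:Z).

(* C^n v = v (mod N) for every v in Z_N^2 (vectors represented by integer
   column vectors, equality taken entrywise modulo N). *)
Definition cat_fixes (N : nat) (C : 'M[int]_2) (n : nat) : Prop :=
  forall v : 'cV[int]_2, forall i : 'I_2,
    (N%:Z %| ((C ^+ n) *m v - v) i ord0)%Z.

Definition cat_least_period (N : nat) (C : 'M[int]_2) (T : nat) : Prop :=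
  (0 < T)%N /\ cat_fixes N C T /\
  forall n : nat, (0 < n)%N -> cat_fixes N C n -> (T <= n)%N.

Section Seqs.
Variable R : realType.

Definition Acat (p q : nat) : R := (p * q + 2)%:R.
Definition Bcat (p q : nat) : R := Num.sqrt (Acat p q ^+ 2 - 4).
Definition Gcat (p q n : nat) : R :=
  ((Acat p q + Bcat p q) / 2) ^+ n + ((Acat p q - Bcat p q) / 2) ^+ n.
Definition Hcat (p q n : nat) : R :=
  (((Acat p q + Bcat p q) / 2) ^+ n - ((Acat p q - Bcat p q) / 2) ^+ n)
    / Bcat p q.

(* Congruence modulo N for reals (which here are integers):
   x = y (mod N) iff x - y is an integer multiple of N. *)
Definition congR (N : nat) (x y : R) : Prop :=
  exists k : int, x - y = k%:~R * N%:R.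

Definition cat_conds (p q N n : nat) : Prop :=
  [/\ congR N (p%:R * Hcat p q n) 0,
      congR N (q%:R * Hcat p q n) 0,
      congR N (Gcat p q n / 2 - (p * q)%:R * Hcat p q n / 2) 1
    & congR N (Gcat p q n / 2 + (p * q)%:R * Hcat p q n / 2) 1].
End Seqs.

(* Main.v *)
Require Import Defs.
From HB Require Import structures.
From mathcomp Require Import all_boot all_order all_algebra.
From mathcomp Require Import reals.
From mathcomp Require Import ring lra.
Import Order.TTheory GRing.Theory Num.Theory.
Local Open Scope ring_scope.


Fixpoint hs (a : int) (n : nat) : int :=
  match n with 0%N => 0 | 1%N => 1 | (m.+1 as n').+1 => a * hs a n' - hs a m end.

Definition Mn (p q n : nat) : 'M[int]_2 :=
  let a := (p * q + 2)%N%:Z in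
  \matrix_(i < 2, j < 2)
    if i == 0 then (if j == 0 then hs a n.+1 - (p * q + 1)%N%:Z * hs a n else p%:Z * hs a n)
    else (if j == 0 then q%:Z * hs a n else hs a n.+1 - hs a n).

Lemma hsS a n : hs a n.+2 = a * hs a n.+1 - hs a n.
Proof. by []. Qed.

Lemma catC_exp p q n : catC p q ^+ n = Mn p q n.
Proof.
elim: n => [|n IH].
  rewrite expr0; apply/matrixP => i j; rewrite !mxE.
  case: i => [[|[|//]] Hi]; case: j => [[|[|//]] Hj] /=.
  all: rewrite ?mulr0 ?subr0 //.
rewrite exprSr -mulmxE IH; apply/matrixP => i j; rewrite !mxE !big_ord_recl big_ord0 !mxE.
rewrite hsS; move: (hs _ n.+1) (hs _ n) => x y.
case: i => [[|[|//]] Hi]; case: j => [[|[|//]] Hj] /=; rewrite ?PoszD ?PoszM; ring.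
Qed.


Section R.
Variable R : realType.
Variables p q : nat.
Hypothesis hp : (0 < p)%N.
Hypothesis hq : (0 < q)%N.

Let A : R := Acat R p q.
Let B : R := Bcat R p q.
Let L : R := (A + B) / 2.
Let M : R := (A - B) / 2.

Lemma A_ge : 3 <= A.
Proof.
rewrite /A /Acat.
have : (3 <= p * q + 2)%N by rewrite -[3%N]/(1 + 2)%N leq_add2r muln_gt0 hp hq.
by rewrite -(ler_nat R).
Qed.

Lemma B_sq : B ^+ 2 = A ^+ 2 - 4.
Proof. rewrite /B /Bcat sqr_sqrtr //. have := A_ge. nra. Qed.

Lemma B_pos : 0 < B.
Proof. rewrite /B /Bcat sqrtr_gt0. have := A_ge. nra. Qed.

Lemma LM1 : L * M = 1.
Proof.
have -> : L * M = (A ^+ 2 - B ^+ 2) / 4 by rewrite /L /M; field.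
by rewrite B_sq; field.
Qed.

Lemma LmM : L - M = B.
Proof. by rewrite /L /M; field. Qed.

Lemma LpM : L + M = A.
Proof. by rewrite /L /M; field. Qed.

Lemma sq_rec x n : x ^+ 2 = A * x - 1 -> x ^+ n.+2 = A * x ^+ n.+1 - x ^+ n.
Proof. move=> h; rewrite !exprS mulrA -expr2 h; ring. Qed.


Lemma Hcat_eq n : Hcat R p q n = (hs (p * q + 2)%N n)%:~R.
Proof.
have L2 : L ^+ 2 = A * L - 1 by rewrite -LpM -LM1; ring.
have M2 : M ^+ 2 = A * M - 1 by rewrite -LpM -LM1; ring.
have Bn : B != 0 by rewrite gt_eqF ?B_pos.
suff : Hcat R p q n = (hs (p * q + 2)%N n)%:~R /\ Hcat R p q n.+1 = (hs (p * q + 2)%N n.+1)%:~R by case.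
elim: n => [|n [IH1 IH2]].
  rewrite /Hcat -/A -/B -/L -/M !expr0 !expr1 subrr mul0r LmM divff //.
split=> //.
rewrite hsS rmorphB rmorphM /= -IH1 -IH2 /Hcat -/A -/B -/L -/M (sq_rec L n L2) (sq_rec M n M2).
have -> : ((p * q + 2)%N%:Z)%:~R = A by [].
by field.
Qed.

Lemma Gcat_eq n : Gcat R p q n = 2 * Hcat R p q n.+1 - A * Hcat R p q n.
Proof.
have Bn : L - M != 0 by rewrite LmM gt_eqF ?B_pos.
rewrite /Gcat /Hcat -/A -/B -/L -/M -LmM -LpM !exprS.
by field.
Qed.
End R.


Lemma congR_dvd (R : realType) N (x y : R) z :
  x - y = z%:~R -> (congR N x y <-> (N%:Z %| z)%Z).
Proof.
rewrite /congR => ->; split.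
  case=> k hk; apply/dvdzP; exists k; apply: (@intr_inj R).
  by rewrite hk intrM.
by case/dvdzP => k ->; exists k; rewrite intrM.
Qed.

Arguments congR_dvd {R N x y z}.

Lemma fixes_iff N (Mx : 'M[int]_2) :
  (forall v : 'cV[int]_2, forall i : 'I_2, (N%:Z %| (Mx *m v - v) i ord0)%Z) <->
  [/\ (N%:Z %| Mx ord0 ord0 - 1)%Z, (N%:Z %| Mx ord0 ord_max)%Z, (N%:Z %| Mx ord_max ord0)%Z
    & (N%:Z %| Mx ord_max ord_max - 1)%Z].
Proof.
have E1 : lift ord0 ord0 = ord_max :> 'I_2 by apply/val_inj.
have E0 : 0 = ord0 :> 'I_2 by apply/val_inj.
have E1' : 1 = ord_max :> 'I_2 by apply/val_inj.
split.
  move=> H.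
  have := H (\col_k (if k == 0 then 1 else 0)) ord0.
  have := H (\col_k (if k == 0 then 1 else 0)) ord_max.
  have := H (\col_k (if k == 0 then 0 else 1)) ord0.
  have := H (\col_k (if k == 0 then 0 else 1)) ord_max.
  rewrite !mxE !big_ord_recl !big_ord0 !mxE /= ?E1 ?E0 /=.
  rewrite !mulr1 !mulr0 !addr0 ?add0r ?subr0.
  by move=> h1 h2 h3 h4; split.
case=> h00 h01 h10 h11 v i.
have [->|->] : i = ord0 \/ i = ord_max.
  by case: i => [[|[|//]] Hi]; [left|right]; apply/val_inj.
  rewrite !mxE !big_ord_recl !big_ord0 ?mxE E1 addr0.
  have -> : Mx ord0 ord0 * v ord0 ord0 + Mx ord0 ord_max * v ord_max ord0 - v ord0 ord0 =
    (Mx ord0 ord0 - 1) * v ord0 ord0 + Mx ord0 ord_max * v ord_max ord0 by ring.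
  by rewrite rpredD // dvdz_mulr.
rewrite !mxE !big_ord_recl !big_ord0 ?mxE E1 addr0.
have -> : Mx ord_max ord0 * v ord0 ord0 + Mx ord_max ord_max * v ord_max ord0 - v ord_max ord0 =
  Mx ord_max ord0 * v ord0 ord0 + (Mx ord_max ord_max - 1) * v ord_max ord0 by ring.
by rewrite rpredD // dvdz_mulr.
Qed.


Lemma conds_iff (R : realType) p q N n : (0 < p)%N -> (0 < q)%N ->
  (cat_conds R p q N n <-> cat_fixes N (catC p q) n).
Proof.
move=> hp hq.
rewrite /cat_conds /cat_fixes catC_exp fixes_iff /Mn !mxE Gcat_eq // !Hcat_eq // /Acat.
move: (hs _ n.+1) (hs _ n) => x y /=.
have H1 : (p%:R * y%:~R - 0 = (p%:Z * y)%:~R :> R) by rewrite subr0 intrM.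
have H2 : (q%:R * y%:~R - 0 = (q%:Z * y)%:~R :> R) by rewrite subr0 intrM.
have H3 : (2 * x%:~R - (p * q + 2)%:R * y%:~R) / 2 - (p * q)%:R * y%:~R / 2 - 1 =
   (x - (p * q + 1)%N%:Z * y - 1)%:~R :> R.
  by field.
have H4 : (2 * x%:~R - (p * q + 2)%:R * y%:~R) / 2 + (p * q)%:R * y%:~R / 2 - 1 =
   (x - y - 1)%:~R :> R.
  by field.
have e1 := congR_dvd (N:=N) H1. have e2 := congR_dvd (N:=N) H2.
have e3 := congR_dvd (N:=N) H3. have e4 := congR_dvd (N:=N) H4.
split; case=> ? ? ? ?; split; tauto.
Qed.

Theorem proposition1 (R : realType) (p q N T : nat) :
  (0 < p)%N -> (0 < q)%N -> (0 < N)%N ->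
  (cat_least_period N (catC p q) T <->
   [/\ (0 < T)%N, cat_conds R p q N T &
       forall n : nat, (0 < n)%N -> cat_conds R p q N n -> (T <= n)%N]).
Proof.
move=> hp hq hN; rewrite /cat_least_period.
have E n := @conds_iff R p q N n hp hq.
split.
  case=> h0 [h1 h2]; split => //; first by apply/E.
  by move=> n hn /E; apply: h2.
case=> h0 h1 h2; split => //; split; first by apply/E.
by move=> n hn /E; apply: h2.
Qed.
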